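(* Let $m\ge2$ be an integer and put $p(t)=t^{2^m}+1$ for $t\in\mathbb{R}$. Then there is a real polynomial $q$ of degree $2^{m-1}$ such that all $2^{m-1}+1$ coefficients of $q$ are positive and $p(t)=q(t)\,q(-t)$. *)

(* Defs.v *)
From mathcomp Require Import all_boot all_order all_algebra.
From mathcomp Require Import reals.

(* Main.v *)
Require Import Defs.
From mathcomp Require Import all_boot all_order all_algebra.
From mathcomp Require Import reals.
From mathcomp Require Import zify ring lra.
Import Order.TTheory GRing.Theory Num.Theory.
Local Open Scope ring_scope.

Section Aux.
Variable R : realType.

Lemma nonneg_coef (p : {poly R}) :
  (forall i, (i < size p)%N -> 0 < p`_i) -> forall i, 0 <= p`_i.
Proof.
move=> H i; case: (ltnP i (size p)) => hi; first exact/ltW/H.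
by rewrite nth_default.
Qed.

Lemma natlem (a b i : nat) : (0 < a)%N -> (0 < b)%N -> (i < (a + b).-1)%N ->
  (i - minn i a.-1 < b)%N.
Proof. move=> *; rewrite /minn; case: ifP => hh; [|move/negbT: hh; rewrite -leqNgt => hh]; lia. Qed.

Lemma pos_mul (p q : {poly R}) :
  p != 0 -> q != 0 ->
  (forall i, (i < size p)%N -> 0 < p`_i) ->
  (forall i, (i < size q)%N -> 0 < q`_i) ->
  forall i, (i < size (p * q)%R)%N -> 0 < (p * q)`_i.
Proof.
move=> p0 q0 Hp Hq i; rewrite size_mul // => hi.
have sp : (0 < size p)%N by rewrite size_poly_gt0.
have sq : (0 < size q)%N by rewrite size_poly_gt0.
rewrite coefM.
pose j0 := minn i (size p).-1.
have hj0 : (j0 < i.+1)%N by rewrite /j0; rewrite ltnS geq_minl.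
rewrite (bigD1 (Ordinal hj0)) //=.
apply: ltr_pwDl.
  apply: mulr_gt0.
    apply: Hp; rewrite /j0; apply: (leq_ltn_trans (geq_minr _ _)); clear -sp; lia.
  apply: Hq; rewrite /j0 /=; exact: (natlem _ _ _ sp sq hi).
apply: sumr_ge0 => j _; apply: mulr_ge0; exact: nonneg_coef.
Qed.

Definition fac (c : R) : {poly R} :=
  \poly_(i < 3) (if i == 1%N then Num.sqrt (2 + 2 * c) else 1).

Lemma fac_props (c : R) : -1 < c ->
  [/\ size (fac c) = 3%N,
      (forall i, (i < size (fac c))%N -> 0 < (fac c)`_i) &
      forall t, (fac c).[t] * (fac c).[- t] = t ^+ 4 - 2 * c * t ^+ 2 + 1].
Proof.
move=> hc.
have hs : size (fac c) = 3%N by rewrite /fac size_poly_eq //= oner_neq0.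
have ha : 0 < Num.sqrt (2 + 2 * c) by rewrite sqrtr_gt0; lra.
split=> //.
  move=> i; rewrite hs /fac coef_poly => ->.
  by case: (i == 1%N).
have h2 : Num.sqrt (2 + 2 * c) ^+ 2 = 2 + 2 * c by rewrite sqr_sqrtr //; lra.
set a := Num.sqrt _ in h2 ha *.
have ev : forall x, (fac c).[x] = x ^+ 2 + a * x + 1.
  move=> x; rewrite /fac horner_poly !big_ord_recr big_ord0 /=.
  rewrite -/a; ring.
move=> t; rewrite !ev.
rewrite (_ : (t ^+ 2 + a * t + 1) * ((- t) ^+ 2 + a * - t + 1) = (t^+2 + 1)^+2 - a ^+ 2 * t ^+ 2); last by ring.
rewrite h2; ring.
Qed.

Lemma prod_props (s : seq R) : (forall c, c \in s -> -1 < c) ->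
  let q := \prod_(c <- s) fac c in
  [/\ size q = (2 * size s).+1,
      (forall i, (i < size q)%N -> 0 < q`_i) &
      forall t, q.[t] * q.[- t] = \prod_(c <- s) (t ^+ 4 - 2 * c * t ^+ 2 + 1)].
Proof.
elim: s => [|c s IH] H /=.
  rewrite !big_nil size_poly1; split=> //.
    by case=> // _; rewrite coefC ltr01.
  by move=> t; rewrite big_nil !hornerE ?mulr1.
have hc : -1 < c by apply: H; rewrite inE eqxx.
have [IH1 IH2 IH3] := IH (fun x hx => H x (etrans (in_cons c s x) (introT orP (or_intror hx)))).
have [F1 F2 F3] := @fac_props c hc.
have fn0 : fac c != 0 by rewrite -size_poly_gt0 F1.
have qn0 : \prod_(c0 <- s) fac c0 != 0 by rewrite -size_poly_gt0 IH1.
rewrite !big_cons; split.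
- rewrite size_mul // F1 IH1; lia.
- exact: pos_mul.
- by move=> t; rewrite !hornerM mulrACA F3 IH3 ?big_cons.
Qed.

Lemma cos_list (k : nat) : exists s : seq R,
  [/\ size s = (2 ^ k)%N, (forall c, c \in s -> -1 < c < 1) &
      forall t : R, t ^+ (2 ^ k.+1) + 1 = \prod_(c <- s) (t ^+ 2 - 2 * c * t + 1)].
Proof.
elim: k => [|k [s [Hs Hb He]]].
  exists [:: 0]; split => //.
    by move=> c; rewrite inE => /eqP ->; rewrite ltrN10 ltr01.
  by move=> t; rewrite big_cons big_nil; ring.
pose f := fun c : R => Num.sqrt ((1 + c) / 2).
exists (map f s ++ map (fun c => - f c) s); split.
- by rewrite size_cat !size_map Hs expnS; lia.
- have key : forall x, x \in s -> 0 <= f x < 1.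
    move=> x hx; have /andP [h1 h2] := Hb x hx.
    have h3 : 0 <= f x by exact: sqrtr_ge0.
    have h4 : f x ^+ 2 = (1 + x) / 2 by rewrite sqr_sqrtr //; lra.
    apply/andP; split => //; nra.
  move=> c; rewrite mem_cat => /orP [] /mapP [x hx ->];
    have /andP [h3 h4] := key x hx; apply/andP; split; lra.
- move=> t; rewrite big_cat !big_map /= -big_split /=.
  rewrite expnS exprM He; apply: eq_big_seq => x hx.
  have /andP [h1 h2] := Hb x hx.
  have h4 : f x ^+ 2 = (1 + x) / 2 by rewrite sqr_sqrtr //; lra.
  rewrite (_ : (t ^+ 2 - 2 * f x * t + 1) * (t ^+ 2 - 2 * - f x * t + 1)
     = (t ^+ 2 + 1) ^+ 2 - 4 * f x ^+ 2 * t ^+ 2); last by ring.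
  by rewrite h4; field.
Qed.

End Aux.

Theorem lemma9p1 (R : realType) (m : nat) (hm : (2 <= m)%N) :
  exists q : {poly R},
    size q = (2 ^ m.-1).+1 /\
    (forall i : nat, (i < size q)%N -> 0 < q`_i) /\
    (forall t : R, t ^+ (2 ^ m) + 1 = q.[t] * q.[- t]).
Proof.
case: m hm => [|[|k]] // _.
have [s [Hs Hb He]] := cos_list R k.
have hs : forall c, c \in s -> -1 < c by move=> c /Hb /andP [].
have [P1 P2 P3] := @prod_props R s hs.
exists (\prod_(c <- s) fac R c); split; [|split] => //.
  by rewrite P1 Hs /= expnS.
move=> t; rewrite P3 (expnS 2 k.+1) exprM He.
by apply: eq_bigr => c _; rewrite -!exprM.
Qed.
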